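(* Let $f$ be a complex polynomial of degree $d$ with $f(0)\ne0$, with roots $\zeta_1,\dots,\zeta_d$ (counted with multiplicity) ordered so that $|\zeta_1|\le\cdots\le|\zeta_d|$. For $N\ge0$ let $g=G^Nf=\sum_i g_ix^i$, let $r^{(N)}:[0,d]\to\mathbb{R}\cup\{+\infty\}$ be the piecewise linear function with $r^{(N)}(i)=-2^{-N}\log|g_i|$ for $i=0,\dots,d$, and let $\varphi^{(N)}$ be its convex hull (the greatest convex function on $[0,d]$ bounded above by $r^{(N)}$). Then for every $i=1,\dots,d$, \[ \lim_{N\to\infty}\big(\varphi^{(N)}(i)-\varphi^{(N)}(i-1)\big)=\log|\zeta_i|, \] and moreover $\big|\varphi^{(N)}(i)-\varphi^{(N)}(i-1)-\log|\zeta_i|\big|\le 2^{-N}\log(2d)$ for every $N$.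
   Context: $\log$ is the natural logarithm. The Graeffe operator maps a degree $d$ polynomial $f$ to $Gf(x)=(-1)^d f(\sqrt{x})f(-\sqrt{x})$, again of degree $d$; $G^N$ is its $N$-th iterate. The function $\varphi^{(N)}$ is called the $N$-th Renormalized Newton Diagram of $f$. *)

(* Defs.v *)
From mathcomp Require Import all_boot all_order all_algebra.
From mathcomp Require Import complex.
From mathcomp Require Import all_classical all_reals all_analysis.

Set Implicit Arguments.
Unset Strict Implicit.
Unset Printing Implicit Defensive.

Import Order.TTheory GRing.Theory Num.Theory.
Local Open Scope ring_scope.

Section Graeffe.
Variable R : realType.
Local Notation C := R[i].

Definition modC (z : C) : R := Normc.normc z.

(* Graeffe operator: (Gf)(x) = (-1)^d f(sqrt x) f(-sqrt x), d = deg f.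
   f(y) f(-y) is an even polynomial h(y) = q(y^2); q = even_poly h is the
   polynomial whose i-th coefficient is the 2i-th coefficient of h. *)
Definition graeffe (f : {poly C}) : {poly C} :=
  (-1) ^+ (size f).-1 *: even_poly (f * (f \Po (- 'X))).

Definition graeffeN (N : nat) (f : {poly C}) : {poly C} := iter N graeffe f.

Definition rnode (f : {poly C}) (N i : nat) : \bar R :=
  let g := graeffeN N f in
  if g`_i == 0 then +oo%E else (- (2 ^- N) * ln (modC g`_i))%:E.

(* piecewise linear interpolation on [0,d] of the values a 0, ..., a d
   (with value +oo on an open segment adjacent to an infinite node) *)
Definition pl_interp (a : nat -> \bar R) (x : R) : \bar R :=
  let i := Num.truncn x in
  let t := x - i%:R in
  if t == 0 then a i
  else ((1 - t)%:E * a i + t%:E * a i.+1)%E.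

Definition convex_on (d : nat) (c : R -> R) : Prop :=
  forall x y t : R, 0 <= x <= d%:R -> 0 <= y <= d%:R -> 0 <= t <= 1 ->
    c ((1 - t) * x + t * y) <= (1 - t) * c x + t * c y.

Definition convex_hull (d : nat) (r : R -> \bar R) (x : R) : \bar R :=
  ereal_sup [set (c x)%:E | c in [set c : R -> R | convex_on d c /\
               (forall y, 0 <= y <= d%:R -> ((c y)%:E <= r y)%E)]].

Definition rnd (f : {poly C}) (N : nat) : R -> \bar R :=
  convex_hull (size f).-1 (pl_interp (rnode f N)).

End Graeffe.

(* Main.v *)
Require Import Defs.
From mathcomp Require Import all_boot all_order all_algebra.
From mathcomp Require Import complex.
From mathcomp Require Import all_classical all_reals all_analysis.
From mathcomp Require Import ring lra.

Set Implicit Arguments.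
Unset Strict Implicit.
Unset Printing Implicit Defensive.

Import Order.TTheory GRing.Theory Num.Theory.
Import numFieldTopology.Exports numFieldNormedType.Exports.
Local Open Scope classical_set_scope.
Local Open Scope ring_scope.

Section Alg.
Variable R : realType.
Local Notation C := R[i].
Implicit Types x y z : C.
Lemma modC_ge0 z : 0 <= modC z.
Proof. rewrite /modC /Normc.normc; case: z => a b; exact: sqrtr_ge0. Qed.
Lemma modCM x y : modC (x * y) = modC x * modC y.
Proof. exact: Normc.normcM. Qed.
Lemma modCD x y : modC (x + y) <= modC x + modC y.
Proof. exact: le_normcD. Qed.
Lemma modCN x : modC (- x) = modC x.
Proof. exact: normcN. Qed.
Lemma modC_eq0 x : (modC x == 0) = (x == 0).
Proof. apply/eqP/eqP => [/Normc.eq0_normc //|->]; exact: Normc.normc0. Qed.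
Lemma modC1 : modC (1 : C) = 1. Proof. exact: Normc.normc1. Qed.
Lemma modCV x : modC x^-1 = (modC x)^-1. Proof. exact: Normc.normcV. Qed.
Lemma modCX x n : modC (x ^+ n) = modC x ^+ n.
Proof. elim: n => [|n IH]; first by rewrite !expr0 modC1. by rewrite !exprS modCM IH. Qed.
Lemma modC_sum (I : Type) (r : seq I) (P : pred I) (F : I -> C) :
  modC (\sum_(i <- r | P i) F i) <= \sum_(i <- r | P i) modC (F i).
Proof.
apply: (big_ind2 (fun (x : C) (y : R) => modC x <= y)).
- by rewrite /modC Normc.normc0.
- move=> x1 x2 y1 y2 h1 h2; apply: le_trans (modCD _ _) _; exact: lerD.
- by [].
Qed.
Lemma modC_gt0 x : x != 0 -> 0 < modC x.
Proof. by move=> h; rewrite lt_def modC_eq0 h modC_ge0. Qed.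
Lemma sum_prefix (F : nat -> R) m n : (m <= n)%N -> (forall k, 0 <= F k) ->
  \sum_(k < m) F k <= \sum_(k < n) F k.
Proof.
move=> mn F0; rewrite -(subnKC mn) big_split_ord /= lerDl.
by apply: sumr_ge0 => k _.
Qed.

Lemma core_up (p K : nat -> C) (rho S : R) (i M : nat) :
  0 < rho -> 0 <= S -> K 0%N = 1 ->
  (forall n, (i <= n < M)%N -> \sum_(k < n.+1) p (n - k)%N * K k = 0) ->
  \sum_(k < M) modC (K k) * rho ^+ k <= 2 ->
  (forall m, (m < i)%N -> modC (p m) * rho ^+ m <= S) ->
  forall n, (n < M)%N -> modC (p n) * rho ^+ n <= S.
Proof.
move=> rho0 S0 K0 hrec hK hlow n.
elim/ltn_ind: n => n IH nM.
case: (ltnP n i) => [ni|ni]; first exact: hlow.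
move: (hrec n); rewrite ni nM => /(_ isT) E.
rewrite big_ord_recl /= subn0 K0 mulr1 in E.
have -> : p n = - \sum_(k < n) p (n - (bump 0 k))%N * K (bump 0 k).
  by apply/eqP; rewrite -subr_eq0 opprK; apply/eqP.
rewrite modCN.
have hsum : \sum_(k < n) modC (K (bump 0 k)) * rho ^+ (bump 0 k) <= 1.
  have F0 : forall k, 0 <= modC (K k) * rho ^+ k.
    by move=> k; rewrite mulr_ge0 ?modC_ge0 ?exprn_ge0 ?ltW.
  have h := @sum_prefix (fun k => modC (K k) * rho ^+ k) _ _ nM F0.
  rewrite big_ord_recl /= K0 modC1 expr0 mulr1 in h.
  lra.
apply: (le_trans (y := (\sum_(k<n) modC (p (n - bump 0 k)%N * K (bump 0 k))) * rho ^+ n)).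
  by apply: ler_wpM2r; [exact: exprn_ge0 (ltW rho0) | exact: modC_sum].
rewrite mulr_suml.
apply: le_trans (_ : \sum_(k < n) S * (modC (K (bump 0 k)) * rho ^+ (bump 0 k)) <= _); last first.
  by rewrite -mulr_sumr; rewrite -[X in _ <= X]mulr1; apply: ler_wpM2l.
apply: ler_sum => k _.
have kn : (bump 0 k <= n)%N by rewrite /bump /= add1n ltn_ord.
rewrite modCM.
have -> : rho ^+ n = rho ^+ (n - bump 0 k) * rho ^+ (bump 0 k) by rewrite -exprD subnK.
rewrite mulrACA; apply: ler_wpM2r.
  by rewrite mulr_ge0 ?modC_ge0 ?exprn_ge0 ?ltW.
apply: IH; last by apply: leq_ltn_trans (leq_subr _ _) nM.
by rewrite /bump /= add1n subnS prednK ?subn_gt0 // ?leq_subr ?ltn_subrL //; rewrite ltn_subrL andbT; case: n kn {E IH hsum nM ni} => //.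
Qed.
Definition geo (u : C) (M : nat) : {poly C} := \poly_(k < M) u ^+ k.

Lemma geo_telescope (u : C) M :
  (1 - u%:P * 'X) * geo u M = 1 - (u ^+ M)%:P * 'X^M.
Proof.
rewrite /geo; elim: M => [|M IH].
  by rewrite poly_def big_ord0 mulr0 expr0 expr0 mul1r subrr.
rewrite poly_def big_ord_recr /= -poly_def mulrDr IH -mul_polyC.
rewrite !exprS rmorphM /= rmorphXn /=; ring.
Qed.

Lemma XsubC_geo (v : C) M : v != 0 ->
  ('X - v%:P) * geo v^-1 M = (- v)%:P * (1 - ((v^-1) ^+ M)%:P * 'X^M).
Proof.
move=> v0; rewrite -geo_telescope mulrA; congr (_ * _).
rewrite mulrBr mulr1 mulrA -rmorphM /= mulNr mulfV // polyCN; ring.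
Qed.

Lemma prod_modX (I : Type) (s : seq I) (a b : I -> C) M :
  exists E : {poly C}, \prod_(v <- s) ((a v)%:P * (1 - (b v)%:P * 'X^M))
     = (\prod_(v <- s) a v)%:P + 'X^M * E.
Proof.
elim: s => [|v s [E IH]]; first by exists 0; rewrite !big_nil mulr0 addr0.
exists ((a v)%:P * E - (a v * b v)%:P * ((\prod_(v <- s) a v)%:P + 'X^M * E)).
rewrite !big_cons IH rmorphM /= rmorphM /=; ring.
Qed.

Definition Maj (F : {poly C}) (Ft : {poly R}) :=
  (forall k, modC F`_k <= Ft`_k) /\ (forall k, 0 <= Ft`_k).

Lemma MajM F G Ft Gt : Maj F Ft -> Maj G Gt -> Maj (F * G) (Ft * Gt).
Proof.
move=> [hF hF0] [hG hG0]; split => k; rewrite !coefM; last first.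
  by apply: sumr_ge0 => j _; rewrite mulr_ge0.
apply: le_trans; first exact: modC_sum.
apply: ler_sum => j _; rewrite modCM.
by apply: ler_pM; rewrite ?modC_ge0.
Qed.

Lemma Maj1 : Maj 1 1.
Proof.
split => k; rewrite !coefC; case: (k == 0)%N; rewrite ?modC1 ?modC_eq0 //.
by rewrite /modC Normc.normc0.
Qed.

Lemma Maj_geo (v : C) (mu : R) M : 0 < mu -> mu <= modC v ->
  Maj (geo v^-1 M) (\poly_(k < M) (mu^-1) ^+ k).
Proof.
move=> mu0 muv; have v0 : 0 < modC v by apply: lt_le_trans muv.
split => k; rewrite /geo !coef_poly; case: (k < M)%N => //.
- rewrite modCX modCV; apply: lerXn2r; rewrite ?nnegrE ?invr_ge0 ?(ltW v0) ?(ltW mu0) //.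
  by rewrite lef_pV2 ?posrE.
- by rewrite /modC Normc.normc0.
- by rewrite exprn_ge0 // invr_ge0 ltW.
Qed.

Lemma Maj_prod (s : seq C) (mu : R) M : 0 < mu -> (forall v, v \in s -> mu <= modC v) ->
  Maj (\prod_(v <- s) geo v^-1 M) ((\poly_(k < M) (mu^-1) ^+ k) ^+ size s).
Proof.
move=> mu0; elim: s => [|v s IH] hs; first by rewrite big_nil expr0; exact: Maj1.
rewrite big_cons exprS; apply: MajM.
  by apply: Maj_geo => //; apply: hs; rewrite mem_head.
by apply: IH => w ws; apply: hs; rewrite in_cons ws orbT.
Qed.

Lemma bernoulli_ineq (x : R) n : 0 <= x <= 1 -> 1 - n%:R * x <= (1 - x) ^+ n.
Proof.
move=> /andP[x0 x1]; elim: n => [|n IH]; first by rewrite mul0r subr0 expr0.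
rewrite exprS.
have h : (1 - x) * (1 - n%:R * x) <= (1 - x) * (1 - x) ^+ n.
  by apply: ler_wpM2l; rewrite ?subr_ge0.
have hn : 0 <= n%:R * x :> R by rewrite mulr_ge0.
rewrite -natr1; nra.
Qed.

Lemma geo_bound (x : R) M n : 0 <= x -> 2 * n%:R * x <= 1 ->
  (\sum_(k < M) x ^+ k) ^+ n <= 2.
Proof.
move=> x0 hx; case: n hx => [|n] hx; first by rewrite expr0; lra.
have hn : 1 <= n.+1%:R :> R by rewrite ler1n.
have x1 : x <= 1 / 2.
  have : 0 <= (n.+1%:R - 1) * x by rewrite mulr_ge0 // subr_ge0.
  nra.
set g := \sum_(k < M) x ^+ k.
have g0 : 0 <= g by apply: sumr_ge0 => k _; rewrite exprn_ge0.
have hg : (1 - x) * g <= 1.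
  have := subrX1 x M; rewrite -/g => h.
  have : (1 - x) * g = 1 - x ^+ M by rewrite -opprB mulNr -h; ring.
  move=> ->; rewrite lerBlDr lerDl exprn_ge0 //.
have x1' : x <= 1 by lra.
have hb := @bernoulli_ineq x n.+1 (introT andP (conj x0 x1')).
have hgn : ((1 - x) * g) ^+ n.+1 <= 1.
  by rewrite exprn_ile1 // mulr_ge0 // subr_ge0; lra.
rewrite exprMn in hgn.
have h1 : g ^+ n.+1 * (1/2) <= g ^+ n.+1 * (1 - x) ^+ n.+1.
  apply: ler_wpM2l; first by rewrite exprn_ge0.
  apply: le_trans _ hb; lra.
have : 0 <= g ^+ n.+1 by rewrite exprn_ge0.
rewrite mulrC in hgn; lra.
Qed.
Lemma Lo_poly (P A : {poly C}) (s : seq C) (i : nat) (mu rho S : R) :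
  0 < mu -> 0 < rho -> (forall v, v \in s -> mu <= modC v) ->
  2 * (size s)%:R * rho <= mu -> (size A <= i)%N ->
  P = A * \prod_(v <- s) ('X - v%:P) -> 0 <= S ->
  (forall m, (m < i)%N -> modC P`_m * rho ^+ m <= S) ->
  forall n, modC P`_n * rho ^+ n <= S.
Proof.
move=> mu0 rho0 hs hrho hA hP S0 hlow n.
have v0 : forall v, v \in s -> v != 0.
  move=> v /hs hv; rewrite -modC_eq0; apply/eqP => h; rewrite h in hv; lra.
pose M := n.+1.
pose K := \prod_(v <- s) geo v^-1 M.
apply: (@core_up (fun k => P`_k) (fun k => K`_k) rho S i M) => //.
- rewrite -horner_coef0 horner_prod big1 // => v _.
  by rewrite horner_coef0 /geo coef_poly /= expr0.
- move=> m /andP[im mM].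
  have -> : \sum_(k < m.+1) P`_(m - k) * K`_k = (K * P)`_m.
    by rewrite coefM; apply: eq_bigr => k _; rewrite mulrC.
  have -> : K * P = A * \prod_(v <- s) ((- v)%:P * (1 - ((v^-1) ^+ M)%:P * 'X^M)).
    rewrite hP mulrCA; congr (_ * _); rewrite mulrC -big_split /=.
    by apply: eq_big_seq => v vs; rewrite XsubC_geo // v0.
  have [E ->] := prod_modX s (fun v => - v) (fun v => (v^-1) ^+ M) M.
  rewrite mulrDr coefD coefMC nth_default ?(leq_trans hA) // mul0r add0r.
  by rewrite mulrCA coefXnM mM.
- have [hM hM0] := Maj_prod M mu0 hs.
  set Kt := _ ^+ size s in hM hM0.
  apply: (@le_trans _ _ (\sum_(k < M) Kt`_k * rho ^+ k)).
    by apply: ler_sum => k _; apply: ler_wpM2r; [exact: exprn_ge0 (ltW rho0)|exact: hM].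
  apply: (@le_trans _ _ (Kt.[rho])).
    rewrite (@horner_coef_wide _ (maxn M (size Kt))) ?leq_maxr //.
    apply: (@sum_prefix (fun k => Kt`_k * rho ^+ k)); first by rewrite leq_maxl.
    by move=> k; rewrite mulr_ge0 // exprn_ge0 // ltW.
  rewrite /Kt horner_exp horner_poly.
  have -> : \sum_(k < M) mu^-1 ^+ k * rho ^+ k = \sum_(k < M) (rho / mu) ^+ k.
    by apply: eq_bigr => k _; rewrite exprMn mulrC.
  apply: geo_bound; first by rewrite divr_ge0 ?ltW.
  rewrite mulrA ler_pdivrMr //; lra.
Qed.
Lemma coef_rev_prod (s : seq C) k :
  (\prod_(w <- s) (1 - w%:P * 'X))`_k =
  if (k <= size s)%N then (\prod_(w <- s) ('X - w%:P))`_(size s - k) else 0.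
Proof.
elim: s k => [|w s IH] k.
  by rewrite !big_nil; case: k => [|k]; rewrite !coef1.
rewrite !big_cons /= mulrBl mul1r -mulrA coefB coefCM coefXM.
rewrite mulrBl coefB coefXM coefCM.
set n := size s.
have Qn : (\prod_(w <- s) ('X - w%:P))`_n.+1 = 0.
  by rewrite nth_default // size_prod_XsubC.
case: k => [|k] /=.
  by rewrite !IH /= !subn0 -/n Qn !mulr0 !subr0.
rewrite !IH -/n subSS ltnS.
case: (ltngtP k n) => [kn|nk|->].
- have -> : ((n - k)%N == 0%N) = false by apply/negbTE; rewrite -lt0n subn_gt0.
  by rewrite -subnS.
- by rewrite mulr0 subr0.
- by rewrite subnn eqxx.
Qed.
Lemma rev_factor (w : C) : w != 0 -> (- w)%:P * ('X - (w^-1)%:P) = 1 - w%:P * 'X.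
Proof.
move=> w0; rewrite mulrBr -rmorphM /= mulNr mulfV // polyCN polyCN; ring.
Qed.

Lemma U_poly (c : C) (W : seq C) (i : nat) (mu rho S : R) :
  c != 0 -> (forall w, w \in W -> w != 0) -> (1 <= i <= size W)%N ->
  (forall w, w \in take i W -> modC w <= mu) -> 0 < mu ->
  rho = 2 * (size W)%:R * mu -> 0 <= S ->
  (forall m, (i <= m <= size W)%N ->
     modC (c *: \prod_(w <- W) ('X - w%:P))`_m * rho ^+ m <= S) ->
  forall k, (k < i)%N -> modC (c *: \prod_(w <- W) ('X - w%:P))`_k * rho ^+ k <= S.
Proof.
move=> c0 W0 /andP[i1 id] hmu mu0 hrho S0 hup k ki.
set d := size W in id hrho hup *.
set Q := \prod_(w <- W) ('X - w%:P).
have d1 : (1 <= d)%N by apply: leq_trans id.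
have dR : 1 <= d%:R :> R by rewrite ler1n.
have rho0 : 0 < rho by rewrite hrho; apply: mulr_gt0 => //; lra.
pose Ph := (c * \prod_(w <- W) (- w)) *: \prod_(w <- W) ('X - (w^-1)%:P).
have hPh : forall m, Ph`_m = if (m <= d)%N then c * Q`_(d - m) else 0.
  move=> m; rewrite /Ph -scalerA coefZ.
  have -> : (\prod_(w <- W) - w) *: \prod_(w <- W) ('X - (w^-1)%:P)
            = \prod_(w <- W) (1 - w%:P * 'X).
    rewrite -mul_polyC rmorph_prod /= -big_split /=.
    by apply: eq_big_seq => w wW; rewrite rev_factor // W0.
  rewrite coef_rev_prod -/d -/Q; case: (m <= d)%N => //; by rewrite mulr0.
pose A := (c * \prod_(w <- W) (- w)) *: \prod_(w <- drop i W) ('X - (w^-1)%:P).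
have hA : (size A <= d - i + 1)%N.
  apply: leq_trans (size_scale_leq _ _) _.
  by rewrite size_prod_XsubC size_drop addn1.
have hPhA : Ph = A * \prod_(v <- map GRing.inv (take i W)) ('X - v%:P).
  rewrite /Ph /A -scalerAl big_map; congr (_ *: _).
  by rewrite mulrC -big_cat /= cat_take_drop.
have rhoV : rho^-1 ^+ d = (rho ^+ d)^-1 by rewrite exprVn.
have key := @Lo_poly Ph A (map GRing.inv (take i W)) (d - i + 1) mu^-1 rho^-1 (S / rho ^+ d).
have h : modC Ph`_(d - k) * rho^-1 ^+ (d - k) <= S / rho ^+ d.
  apply: key.
  - by rewrite invr_gt0.
  - by rewrite invr_gt0.
  - move=> v /mapP[w wt ->]; rewrite modCV lef_pV2 ?posrE ?hmu //.
    apply: modC_gt0; apply: W0; exact: mem_take wt.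
  - rewrite size_map size_takel // hrho invfM mulrA.
    rewrite -[X in _ <= X]mul1r; apply: ler_wpM2r; first by rewrite invr_ge0 ltW.
    have : i%:R <= d%:R :> R by rewrite ler_nat.
    rewrite ler_pdivrMr; last by rewrite mulr_gt0 //; lra.
    lra.
  - by [].
  - by [].
  - by rewrite divr_ge0 // exprn_ge0 // ltW.
  - move=> m mi.
    rewrite hPh.
    have md : (m <= d)%N by move: mi; rewrite addn1 ltnS => /leq_trans; apply; rewrite leq_subr.
    rewrite md.
    have e : rho ^+ d = rho ^+ (d - m) * rho ^+ m by rewrite -exprD subnK.
    rewrite exprVn e invfM mulrA ler_pM2r ?invr_gt0 ?exprn_gt0 //.
    rewrite ler_pdivlMr ?exprn_gt0 // -coefZ; apply: hup.
    rewrite leq_subr andbT leq_subRL //.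
    by move: mi; rewrite addn1 ltnS leq_subRL // addnC.
move: h; rewrite hPh leq_subr subKn ?(leq_trans (ltnW ki)) // => h.
suff : modC (c * Q`_k) * rho ^+ k / rho ^+ d <= S / rho ^+ d.
  rewrite ler_pM2r ?invr_gt0 ?exprn_gt0 //.
  by rewrite /Q -coefZ.
apply: le_trans h.
rewrite -mulrA; apply: ler_wpM2l; first exact: modC_ge0.
have e : rho ^+ d = rho ^+ (d - k) * rho ^+ k by rewrite -exprD subnK // (leq_trans (ltnW ki)).
rewrite e exprVn invfM mulrA mulrAC divff ?mul1r //.
by rewrite expf_neq0 // gt_eqF.
Qed.
Lemma even_comp (q : {poly C}) : even_poly (q \Po 'X^2) = q.
Proof.
apply/polyP => i; rewrite coef_even_poly coef_comp_poly_Xn //.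
by rewrite -muln2 dvdn_mull // mulnK.
Qed.

Lemma prod_graeffe_aux (s : seq C) :
  \prod_(z <- s) (('X - z%:P) * (- 'X - z%:P)) =
  (-1) ^+ size s *: ((\prod_(z <- s) ('X - (z ^+ 2)%:P)) \Po 'X^2).
Proof.
elim: s => [|z s IH]; first by rewrite !big_nil expr0 scale1r comp_polyC.
rewrite !big_cons IH comp_polyM comp_polyB comp_polyX comp_polyC /= [(-1) ^+ _.+1]exprS.
rewrite -!mul_polyC !(rmorphM, rmorphXn, rmorphN, rmorph1) /=; ring.
Qed.

Lemma graeffe_prod (c : C) (s : seq C) : c != 0 ->
  graeffe (c *: \prod_(z <- s) ('X - z%:P)) = (c ^+ 2) *: \prod_(z <- s) ('X - (z ^+ 2)%:P).
Proof.
move=> c0; rewrite /graeffe size_scale // size_prod_XsubC /=.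
rewrite comp_polyZ -scalerAl -scalerAr scalerA -expr2.
have -> : (\prod_(z <- s) ('X - z%:P)) \Po - 'X = \prod_(z <- s) (- 'X - z%:P).
  elim: s {c0} => [|z s IH]; first by rewrite !big_nil comp_polyC.
  by rewrite !big_cons comp_polyM IH comp_polyB comp_polyX comp_polyC.
rewrite -big_split /= prod_graeffe_aux scalerA even_polyZ even_comp scalerA.
congr (_ *: _); rewrite mulrCA -exprMn exprMn -exprM mulnC exprM sqrrN expr1n expr1n mulr1 //.
Qed.

Lemma graeffeN_prod (c : C) (s : seq C) N : c != 0 ->
  iter N (@graeffe R) (c *: \prod_(z <- s) ('X - z%:P)) =
  (c ^+ (2 ^ N)) *: \prod_(z <- s) ('X - (z ^+ (2 ^ N))%:P).
Proof.
move=> c0; elim: N => [|N IH]; first by rewrite /= !expr1.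
rewrite iterS IH -(big_map (fun z => z ^+ (2 ^ N)) xpredT (fun w => 'X - w%:P)).
rewrite graeffe_prod ?expf_neq0 // big_map -exprM expnSr; congr (_ *: _).
by apply: eq_bigr => z _; rewrite -exprM.
Qed.
End Alg.

Section H.
Variable R : realType.
Variable d : nat.
Variable a : nat -> \bar R.

Lemma truncn_natr (k : nat) : Num.truncn (k%:R : R) = k.
Proof. by apply: truncn_def; rewrite lexx ltr_nat ltnSn. Qed.

Lemma pl_nat k : pl_interp a k%:R = a k.
Proof. by rewrite /pl_interp truncn_natr subrr eqxx. Qed.

Lemma pl_ge (m t : R) : (forall k, (k <= d)%N -> ((m + k%:R * t)%:E <= a k)%E) ->
  forall y, 0 <= y <= d%:R -> ((m + y * t)%:E <= pl_interp a y)%E.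
Proof.
move=> hk y /andP[y0 yd]; rewrite /pl_interp.
set j := Num.truncn y.
have /andP[jy yj] := truncn_itv y0; rewrite -/j in jy yj.
set th := y - j%:R.
case: eqP => [th0|/eqP th0].
  have -> : y = j%:R by apply/eqP; rewrite -subr_eq0; apply/eqP.
  apply: hk; rewrite -(ler_nat R); apply: le_trans jy yd.
have th_gt0 : 0 < th by rewrite lt_def th0 /= subr_ge0.
have yj' : y < j%:R + 1 by rewrite natr1.
have th_lt1 : th < 1 by rewrite /th; lra.
have jd : (j.+1 <= d)%N.
  have : j%:R < d%:R :> R by rewrite /th in th_gt0; lra.
  by rewrite ltr_nat.
have h1 := lee_wpmul2l (x := (1 - th)%:E) (ltac:(rewrite lee_fin subr_ge0 ltW //)) (hk j (ltnW jd)).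
have h2 := lee_wpmul2l (x := th%:E) (ltac:(rewrite lee_fin ltW //)) (hk j.+1 jd).
apply: le_trans (leeD h1 h2); rewrite -!EFinM -EFinD lee_fin.
have -> : y = j%:R + th by rewrite /th addrC subrK.
rewrite -natr1 le_eqVlt; apply/orP; left; apply/eqP; ring.
Qed.

Local Notation phi := (convex_hull d (pl_interp a)).

Lemma hull_le k : (k <= d)%N -> (phi k%:R <= a k)%E.
Proof.
move=> kd; apply: ge_ereal_sup => _ [c [_ hc] <-].
rewrite -pl_nat; apply: hc; apply/andP; split; [exact: ler0n | by rewrite ler_nat].
Qed.

Lemma hull_ge (m t : R) : (forall k, (k <= d)%N -> ((m + k%:R * t)%:E <= a k)%E) ->
  forall y, 0 <= y <= d%:R -> ((m + y * t)%:E <= phi y)%E.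
Proof.
move=> hk y hy; apply: ereal_sup_ubound; exists (fun y => m + y * t) => //.
split; last exact: pl_ge.
move=> x z s _ _ _; rewrite le_eqVlt; apply/orP; left; apply/eqP; ring.
Qed.

Lemma hull_up (v0 vd : R) : (0 < d)%N -> a 0 = v0%:E -> a d = vd%:E ->
  forall y, 0 <= y <= d%:R ->
  (phi y <= ((1 - y / d%:R) * v0 + (y / d%:R) * vd)%:E)%E.
Proof.
move=> d0 a0 ad y /andP[y0 yd]; apply: ge_ereal_sup => _ [c [cc hc] <-].
have dR : 0 < d%:R :> R by rewrite ltr0n.
set th := y / d%:R.
have th0 : 0 <= th by rewrite divr_ge0 // ltW.
have th1 : th <= 1 by rewrite ler_pdivrMr // mul1r.
have -> : y = (1 - th) * 0 + th * d%:R by rewrite mulr0 add0r /th divfK // gt_eqF.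
have hc0 : c 0 <= v0.
  by rewrite -lee_fin -a0 -pl_nat; apply: hc; rewrite lexx ler0n.
have hcd : c d%:R <= vd.
  by rewrite -lee_fin -ad -pl_nat; apply: hc; rewrite lexx ler0n.
rewrite lee_fin; apply: le_trans (cc 0 d%:R th _ _ _) _.
- by rewrite lexx ler0n.
- by rewrite lexx ler0n.
- by rewrite th0 th1.
apply: lerD; apply: ler_wpM2l => //; by rewrite subr_ge0.
Qed.

Lemma hull_fin (v0 vd m t : R) : (0 < d)%N -> a 0 = v0%:E -> a d = vd%:E ->
  (forall k, (k <= d)%N -> ((m + k%:R * t)%:E <= a k)%E) ->
  forall y, 0 <= y <= d%:R -> phi y = (fine (phi y))%:E.
Proof.
move=> d0 a0 ad hk y hy.
have h1 := hull_ge hk hy; have h2 := hull_up d0 a0 ad hy.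
by case: (phi y) h1 h2.
Qed.

Lemma hull_convex (v0 vd m t : R) : (0 < d)%N -> a 0 = v0%:E -> a d = vd%:E ->
  (forall k, (k <= d)%N -> ((m + k%:R * t)%:E <= a k)%E) ->
  forall x y s, 0 <= x <= d%:R -> 0 <= y <= d%:R -> 0 <= s <= 1 ->
  fine (phi ((1 - s) * x + s * y)) <= (1 - s) * fine (phi x) + s * fine (phi y).
Proof.
move=> d0 a0 ad hk x y s hx hy /andP[s0 s1].
have hz : 0 <= (1 - s) * x + s * y <= d%:R.
  move: hx hy => /andP[x0 xd] /andP[y0 yd]; apply/andP; split; first by rewrite addr_ge0 // mulr_ge0 // subr_ge0.
  nra.
rewrite -lee_fin -(hull_fin d0 a0 ad hk hz).
apply: ge_ereal_sup => _ [c [cc hc] <-]; rewrite lee_fin.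
apply: le_trans (cc x y s hx hy (introT andP (conj s0 s1))) _.
have cx : c x <= fine (phi x).
  rewrite -lee_fin -(hull_fin d0 a0 ad hk hx); apply: ereal_sup_ubound; by exists c.
have cy : c y <= fine (phi y).
  rewrite -lee_fin -(hull_fin d0 a0 ad hk hy); apply: ereal_sup_ubound; by exists c.
by apply: lerD; apply: ler_wpM2l => //; rewrite subr_ge0.
Qed.

Lemma slope_upper (v0 vd m T : R) i n : (0 < d)%N -> a 0 = v0%:E -> a d = vd%:E ->
  (forall k, (k <= d)%N -> ((m + k%:R * T)%:E <= a k)%E) ->
  (1 <= i)%N -> (i <= n)%N -> (n <= d)%N -> a n = (m + n%:R * T)%:E ->
  fine (phi i%:R) - fine (phi (i.-1)%:R) <= T.
Proof.
move=> d0 a0 ad hk i1 iN nd an.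
set x := (i.-1)%:R : R; set y := n%:R : R.
have hxy : y - x = (n - i.-1)%:R by rewrite natrB // (leq_trans (leq_pred _) iN).
have L0 : 0 < y - x by rewrite hxy ltr0n subn_gt0 prednK // ?(leq_trans i1 iN).
set s := (y - x)^-1.
have hs : s * (y - x) = 1 by rewrite mulVf // gt_eqF.
have s0 : 0 <= s by rewrite invr_ge0 ltW.
have s1 : s <= 1.
  rewrite invf_le1 // hxy ler1n subn_gt0 prednK //; exact: leq_trans i1 iN.
have hxi : x + 1 = i%:R by rewrite /x natr1 prednK.
have hx : 0 <= x <= d%:R by rewrite ler0n /= ler_nat (leq_trans (leq_pred _)) // (leq_trans iN).
have hy : 0 <= y <= d%:R by rewrite ler0n /= ler_nat.
have hc := hull_convex d0 a0 ad hk hx hy (introT andP (conj s0 s1)).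
have -> : i%:R = (1 - s) * x + s * y.
  rewrite -hxi; have : s * y = s * x + 1 by rewrite -hs; ring.
  move=> ->; ring.
have hB : fine (phi y) <= m + y * T.
  rewrite -lee_fin -(hull_fin d0 a0 ad hk hy) -an; exact: hull_le.
have hA : m + x * T <= fine (phi x).
  rewrite -lee_fin -(hull_fin d0 a0 ad hk hx); exact: hull_ge.
have h1 : s * fine (phi y) <= s * (m + y * T) by apply: ler_wpM2l.
have h2 : s * (m + x * T) <= s * fine (phi x) by apply: ler_wpM2l.
have e : s * (m + y * T) - s * (m + x * T) = T.
  by rewrite -[RHS]mul1r -hs; ring.
lra.
Qed.

Lemma slope_lower (v0 vd m T : R) i n : (0 < d)%N -> a 0 = v0%:E -> a d = vd%:E ->
  (forall k, (k <= d)%N -> ((m + k%:R * T)%:E <= a k)%E) ->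
  (1 <= i <= d)%N -> (n < i)%N -> a n = (m + n%:R * T)%:E ->
  T <= fine (phi i%:R) - fine (phi (i.-1)%:R).
Proof.
move=> d0 a0 ad hk /andP[i1 id] ni an.
set x := n%:R : R; set y := i%:R : R.
have hxy : y - x = (i - n)%:R by rewrite natrB // ltnW.
have L0 : 0 < y - x by rewrite hxy ltr0n subn_gt0.
set s := (y - x)^-1.
have hs : s * (y - x) = 1 by rewrite mulVf // gt_eqF.
have s0 : 0 <= s by rewrite invr_ge0 ltW.
have s1 : s <= 1 by rewrite invf_le1 // hxy ler1n subn_gt0.
have hx : 0 <= x <= d%:R by rewrite ler0n /= ler_nat (leq_trans (ltnW ni)).
have hy : 0 <= y <= d%:R by rewrite ler0n /= ler_nat.
have hs' : 0 <= 1 - s <= 1 by apply/andP; split; lra.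
have hc := hull_convex d0 a0 ad hk hx hy hs'.
have hyi : (i.-1)%:R = y - 1 by rewrite /y -{2}(prednK i1) -natr1 addrK.
have -> : (i.-1)%:R = (1 - (1 - s)) * x + (1 - s) * y.
  rewrite hyi; have : s * y = s * x + 1 by rewrite -hs; ring.
  move=> e; rewrite [RHS](_ : _ = y - (s * y - s * x)); last by ring.
  by rewrite e; ring.
have hB : fine (phi x) <= m + x * T.
  rewrite -lee_fin -(hull_fin d0 a0 ad hk hx) -an; apply: hull_le.
  by rewrite (leq_trans (ltnW ni)).
have hA : m + y * T <= fine (phi y).
  rewrite -lee_fin -(hull_fin d0 a0 ad hk hy); exact: hull_ge.
have h1 : s * fine (phi x) <= s * (m + x * T) by apply: ler_wpM2l.
have h2 : s * (m + y * T) <= s * fine (phi y) by apply: ler_wpM2l.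
have e : s * (m + y * T) - s * (m + x * T) = T.
  by rewrite -[RHS]mul1r -hs; ring.
have e2 : 1 - (1 - s) = s by ring.
rewrite e2 in hc *.
lra.
Qed.
End H.

Lemma exists_max (R : realType) (q : nat -> R) lo hi : (lo <= hi)%N ->
  exists n, (lo <= n <= hi)%N /\ forall l, (lo <= l <= hi)%N -> q l <= q n.
Proof.
elim: hi => [|hi IH] hlo.
  exists 0%N; split; first by rewrite hlo.
  by move=> l /andP[_]; rewrite leqn0 => /eqP ->.
case: (leqP lo hi) => [lh|hl].
  have [n [/andP[ln nh] hn]] := IH lh.
  case: (leP (q hi.+1) (q n)) => [qle|qlt].
    exists n; split; first by rewrite ln (leq_trans nh).
    move=> l /andP[ll lh1]; case: (ltngtP l hi.+1) => [lt|gt|->] //.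
    - by apply: hn; rewrite ll -ltnS.
    - by move: (leq_trans gt lh1); rewrite ltnn.
  exists hi.+1; split; first by rewrite hlo leqnn.
  move=> l /andP[ll lh1]; case: (ltngtP l hi.+1) => [lt|gt|->] //.
  - by apply: le_trans (hn l _) (ltW qlt); rewrite ll -ltnS.
  - by move: (leq_trans gt lh1); rewrite ltnn.
have -> : lo = hi.+1 by apply/eqP; rewrite eqn_leq hlo hl.
exists hi.+1; split; first by rewrite leqnn.
by move=> l /andP[l1 l2]; have -> : l = hi.+1 by apply/eqP; rewrite eqn_leq l1 l2.
Qed.

Lemma witness (R : realType) (f : {poly R[i]}) (N dd n : nat) (rho : R) :
  0 < rho -> (graeffeN N f)`_n != 0 ->
  (forall k, (k <= dd)%N -> modC (graeffeN N f)`_k * rho ^+ k <=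
                             modC (graeffeN N f)`_n * rho ^+ n) ->
  (forall k, (k <= dd)%N ->
     (((- (2 ^- N) * ln (modC (graeffeN N f)`_n) - n%:R * (2 ^- N * ln rho))
        + k%:R * (2 ^- N * ln rho))%:E <= rnode f N k)%E) /\
  rnode f N n = ((- (2 ^- N) * ln (modC (graeffeN N f)`_n) - n%:R * (2 ^- N * ln rho))
        + n%:R * (2 ^- N * ln rho))%:E.
Proof.
move=> rho0 gn hq.
set g := graeffeN N f in gn hq *.
have s0 : 0 <= 2 ^- N :> R by rewrite invr_ge0 exprn_ge0.
split; last by rewrite /rnode -/g (negbTE gn); congr EFin; ring.
move=> k kd; rewrite /rnode -/g; case: eqP => [_|/eqP gk]; first exact: leey.
rewrite lee_fin.
have := hq k kd.
rewrite -ler_ln ?posrE ?mulr_gt0 ?exprn_gt0 ?modC_gt0 //.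
have pk : 0 < modC g`_k by apply: modC_gt0.
have pn : 0 < modC g`_n by apply: modC_gt0.
have rk : 0 < rho ^+ k by apply: exprn_gt0.
have rn : 0 < rho ^+ n by apply: exprn_gt0.
rewrite (lnM (x := modC g`_k)) ?posrE // (lnM (x := modC g`_n)) ?posrE //.
rewrite !lnXn // -[ln rho *+ k]mulr_natr -[ln rho *+ n]mulr_natr => h.
have h2 := ler_wpM2l s0 h.
set s := 2 ^- N in h2 *.
set A := ln (modC g`_k) in h2 *; set B := ln (modC g`_n) in h2 *; set Lr := ln rho in h2 *.
have e1 : s * (A + Lr * k%:R) = s * A + k%:R * (s * Lr) by ring.
have e2 : s * (B + Lr * n%:R) = s * B + n%:R * (s * Lr) by ring.
rewrite e1 e2 in h2.
set X := k%:R * (s * Lr) in h2 *; set Y := n%:R * (s * Lr) in h2 *.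
have -> : - s * B - Y + X = - (s * B) - Y + X by ring.
have -> : - s * A = - (s * A) by ring.
set sA := s * A in h2 *; set sB := s * B in h2 *.
lra.
Qed.

Lemma cvg_bound (R : realType) (u : nat -> R) (l L : R) :
  (forall N, `|u N - l| <= 2 ^- N * L) -> u N @[N --> \oo] --> l.
Proof.
move=> hu.
have e : (fun N : nat => 2 ^- N * L) @ \oo --> (0 : R).
  have h2 : `|(2 : R)^-1| < 1.
    by rewrite ger0_norm ?invr_ge0 // invf_lt1 // ltr1n.
  have := cvgMr_tmp (b := L) (cvg_expr h2); rewrite mul0r.
  have -> : (fun N : nat => 2 ^- N * L) = (fun N => (2^-1) ^+ N * L).
    by apply: funext => N; rewrite exprVn.
  by move=> h; exact: h.
apply: (@squeeze_cvgr _ _ _ _ (fun N => l - 2 ^- N * L) (fun N => l + 2 ^- N * L)).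
- by near=> N; have := hu N; rewrite ler_distl.
- by rewrite -[X in _ --> X]subr0; apply: cvgB => //; exact: cvg_cst.
- by rewrite -[X in _ --> X]addr0; apply: cvgD => //; exact: cvg_cst.
Unshelve. all: by end_near.
Qed.

Theorem mainTheorem2 (R : realType) (f : {poly R[i]}) (d : nat)
  (zeta : seq R[i]) :
  size f = d.+1 ->
  f.[0] != 0 ->
  size zeta = d ->
  f = lead_coef f *: \prod_(z <- zeta) ('X - z%:P) ->
  sorted (fun z w => modC z <= modC w) zeta ->
  forall i : nat, (1 <= i <= d)%N ->
    ((fun N : nat => (rnd f N i%:R - rnd f N (i.-1)%:R)%E) @ \oo -->
       (ln (modC zeta`_i.-1))%:E)
    /\ (forall N : nat,
        (`| rnd f N i%:R - rnd f N (i.-1)%:R - (ln (modC zeta`_i.-1))%:E |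
           <= (2 ^- N * ln (2 * d%:R))%:E)%E).
Proof.
move=> hsize hf0 hz hf hsort i hi.
have /andP[i1 id] := hi.
have d0 : (0 < d)%N by apply: leq_trans id.
set lc := lead_coef f in hf.
have lc0 : lc != 0 by rewrite /lc lead_coef_eq0 -size_poly_eq0 hsize.
have zeta0 : forall z, z \in zeta -> z != 0.
  move=> z zin; apply: contraNneq hf0 => z0.
  by rewrite hf hornerZ horner_prod (big_rem z zin) /= z0 hornerXsubC subrr mul0r mulr0.
set j := i.-1.
have ji : j.+1 = i by rewrite /j prednK.
have jd : (j < d)%N by rewrite ji.
set mu := modC zeta`_j.
have mu0 : 0 < mu by apply: modC_gt0; apply: zeta0; rewrite mem_nth // hz.
have hso := sorted_leq_nth (leT := fun z w : R[i] => modC z <= modC w)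
  (fun y x z (h1 : modC x <= modC y) h2 => le_trans h1 h2) (fun x => lexx (modC x)) 0 hsort.
have hsmall : forall k, (k <= j)%N -> modC zeta`_k <= mu.
  move=> k kj; apply: hso => //; rewrite inE hz //; exact: leq_ltn_trans kj jd.
have hlarge : forall k, (j <= k < d)%N -> mu <= modC zeta`_k.
  move=> k /andP[jk kd]; apply: hso => //; rewrite inE hz //.
have key : forall N, exists D : R, (rnd f N i%:R - rnd f N j%:R)%E = D%:E /\
    `|D - ln mu| <= 2 ^- N * ln (2 * d%:R).
  move=> N.
  set g := graeffeN N f.
  set W := map (fun z => z ^+ (2 ^ N)) zeta.
  set c := lc ^+ (2 ^ N).
  have c0 : c != 0 by rewrite expf_neq0.
  have hg : g = c *: \prod_(w <- W) ('X - w%:P).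
    by rewrite /g /graeffeN {1}hf graeffeN_prod // big_map.
  have hW : size W = d by rewrite size_map.
  have W0 : forall w, w \in W -> w != 0.
    by move=> w /mapP[z zin ->]; rewrite expf_neq0 // zeta0.
  have hWn : forall k, (k < d)%N -> modC W`_k = modC zeta`_k ^+ (2 ^ N).
    by move=> k kd; rewrite (nth_map 0) ?hz // modCX.
  set muN := mu ^+ (2 ^ N).
  have muN0 : 0 < muN by apply: exprn_gt0.
  have gd : g`_d = c.
    rewrite hg coefZ.
    have /monicP := monic_prod_XsubC W xpredT (fun w => w).
    rewrite lead_coefE size_prod_XsubC hW /= => ->.
    by rewrite mulr1.
  have g0 : g`_0 != 0.
    rewrite -horner_coef0 hg hornerZ horner_prod mulf_neq0 //.
    rewrite prodf_seq_neq0; apply/allP => w wW /=.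
    by rewrite hornerXsubC sub0r oppr_eq0 W0.
  have hrnd : forall x, rnd f N x = convex_hull d (pl_interp (rnode f N)) x.
    by move=> x; rewrite /rnd hsize.
  have a0 : rnode f N 0 = (- (2 ^- N) * ln (modC g`_0))%:E.
    by rewrite /rnode -/g (negbTE g0).
  have ad : rnode f N d = (- (2 ^- N) * ln (modC c))%:E.
    by rewrite /rnode -/g gd (negbTE c0).
  have hL : 2 ^- N * ln muN = ln mu.
    rewrite /muN lnXn // -[ln mu *+ _]mulr_natr natrX mulrCA mulVf ?mulr1 //.
  have h2d : 0 < 2 * d%:R :> R by rewrite mulr_gt0 // ltr0n.
  set rho := 2 * d%:R * muN.
  have rho0 : 0 < rho by rewrite mulr_gt0.
  pose q := fun k => modC g`_k * rho ^+ k.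
  have [n [/andP[inn nd] hn]] := exists_max q id.
  have htake : forall w, w \in take i W -> modC w <= muN.
    move=> w /(nthP 0)[k]; rewrite size_takel ?hW // => ki <-.
    rewrite nth_take // hWn ?(leq_trans ki id) //.
    apply: lerXn2r; rewrite ?nnegrE ?modC_ge0 ?(ltW mu0) //.
    by apply: hsmall; rewrite -ltnS ji.
  have hU := @U_poly R c W i muN rho (q n) c0 W0 (ltac:(by rewrite hW hi)) htake muN0
    (ltac:(by rewrite hW)) (ltac:(by rewrite /q mulr_ge0 ?modC_ge0 ?exprn_ge0 ?ltW))
    (ltac:(by move=> m /andP[im md]; rewrite -hg; apply: hn; rewrite im -hW md)).
  have hall : forall k, (k <= d)%N -> q k <= q n.
    move=> k kd; case: (ltnP k i) => ki; first by have := hU k ki; rewrite -hg.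
    by apply: hn; rewrite ki kd.
  have gn : g`_n != 0.
    apply/eqP => gn0; have := hall d (leqnn d); rewrite /q gn0 gd.
    rewrite /modC Normc.normc0 mul0r => h.
    have : 0 < modC c * rho ^+ d by rewrite mulr_gt0 ?modC_gt0 ?exprn_gt0.
    by rewrite ltNge h.
  have [hk an] := witness rho0 gn hall.
  have up := slope_upper d0 a0 ad hk i1 inn nd an.
  have hT : 2 ^- N * ln rho = ln mu + 2 ^- N * ln (2 * d%:R).
    rewrite /rho lnM ?posrE // mulrDr hL addrC //.
  set rho' := muN / (2 * d%:R).
  have rho'0 : 0 < rho' by rewrite divr_gt0.
  pose q' := fun k => modC g`_k * rho' ^+ k.
  have [n' [/andP[_ n'j] hn']] := exists_max q' (leq0n j).
  pose A := c *: \prod_(w <- take j W) ('X - w%:P).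
  have hdrop : forall v, v \in drop j W -> muN <= modC v.
    move=> v /(nthP 0)[k]; rewrite size_drop hW ltn_subRL => kd <-.
    rewrite nth_drop hWn //.
    apply: lerXn2r; rewrite ?nnegrE ?modC_ge0 ?(ltW mu0) //.
    by apply: hlarge; rewrite leq_addr kd.
  have hsz : 2 * (size (drop j W))%:R * rho' <= muN.
    rewrite size_drop hW /rho' mulrA ler_pdivrMr //.
    rewrite [X in _ <= X]mulrC; apply: ler_wpM2r; first exact: ltW.
    by apply: ler_wpM2l => //; rewrite ler_nat leq_subr.
  have hA : (size A <= i)%N.
    apply: leq_trans (size_scale_leq _ _) _.
    by rewrite size_prod_XsubC size_takel ?hW ?ji // ltnW.
  have hgA : g = A * \prod_(v <- drop j W) ('X - v%:P).
    by rewrite hg /A -scalerAl -big_cat cat_take_drop.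
  have hLo := @Lo_poly R g A (drop j W) i muN rho' (q' n') muN0 rho'0 hdrop hsz hA hgA
    (ltac:(by rewrite /q' mulr_ge0 ?modC_ge0 ?exprn_ge0 // ltW))
    (ltac:(by move=> m mi; apply: hn'; rewrite leq0n -ltnS ji mi)).
  have hall' : forall k, (k <= d)%N -> q' k <= q' n' by move=> k _; exact: hLo.
  have gn' : g`_n' != 0.
    apply/eqP => gn0; have := hall' d (leqnn d); rewrite /q' gn0 gd.
    rewrite /modC Normc.normc0 mul0r => h.
    have : 0 < modC c * rho' ^+ d by rewrite mulr_gt0 ?modC_gt0 ?exprn_gt0.
    by rewrite ltNge h.
  have [hk' an'] := witness rho'0 gn' hall'.
  have n'i : (n' < i)%N by rewrite -ji ltnS.
  have low := slope_lower d0 a0 ad hk' hi n'i an'.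
  have hT' : 2 ^- N * ln rho' = ln mu - 2 ^- N * ln (2 * d%:R).
    by rewrite /rho' ln_div ?posrE // mulrBr hL.
  have hyi : 0 <= (i%:R : R) <= d%:R by rewrite ler0n /= ler_nat.
  have hyj : 0 <= (j%:R : R) <= d%:R by rewrite ler0n /= ler_nat ltnW.
  exists (fine (convex_hull d (pl_interp (rnode f N)) i%:R) -
          fine (convex_hull d (pl_interp (rnode f N)) j%:R)).
  split.
    rewrite !hrnd (hull_fin d0 a0 ad hk hyi) (hull_fin d0 a0 ad hk hyj) -EFinB.
    by [].
  rewrite ler_distl; apply/andP; split.
    by rewrite -hT'.
  by rewrite -hT.
split.
- apply: cvg_EFin.
    by near=> N; have [D [-> _]] := key N.
  apply: (@cvg_bound _ _ _ (ln (2 * d%:R))) => N /=.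
  by have [D [-> hD]] := key N.
- move=> N; have [D [-> hD]] := key N.
  by rewrite -EFinB abse_EFin lee_fin.
Unshelve. all: by end_near.
Qed.
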